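(* Let $X$ be a simplicial set. There is an ordinal $\lambda$ such that $J^\lambda X$ is non-singular.
   Context: A simplex is embedded if its representing map is degreewise injective; a simplicial set is non-singular if every non-degenerate simplex is embedded. $Y^\sharp$ is the set of non-degenerate simplices of $Y$, $n_x$ the degree of $x$, $\bar x$ its representing map, $\varepsilon_i:[0]\to[n]$ the operator $0\mapsto i$. Enforcer: for $x\in Y^\sharp$ of degree $n$, let $i\sim j$ iff $x\varepsilon_i=x\varepsilon_j$, $i\approx k$ iff some $j$ has $i\le k\le j$ and $i\sim j$, and $\simeq$ the equivalence relation generated by $\approx$; its classes are intervals, and $\rho_x:[n]\to[m_x]$ is the order-preserving surjection onto the ordered quotient $\{0,\dots,n\}/\simeq\cong[m_x]$. Enforced collapse: $JY$ is the pushout of $\bigsqcup_{x\in Y^\sharp}\Delta[m_x]\xleftarrow{\sqcup_x\rho_x}\bigsqcup_{x\in Y^\sharp}\Delta[n_x]\xrightarrow{(\bar x)_x}Y$. Iteration: $J^0X=X$, $J^{\beta+1}X=J(J^\beta X)$ with $f^{\beta,\beta+1}:J^\beta X\to J^{\beta+1}X$ the canonical map, and for a limit ordinal $\gamma$, $J^\gamma X=\operatorname{colim}_{\beta<\gamma}J^\beta X$ (the quotient of $X$ identifying $x,y$ iff $f^{0,\beta}(x)=f^{0,\beta}(y)$ for some $\beta<\gamma$); $f^{\alpha,\beta}$ are the induced maps. *)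

(* Defs.v *)
From Stdlib Require Import Relations ClassicalEpsilon.
From mathcomp Require Import all_boot.

Set Implicit Arguments.
Unset Strict Implicit.
Unset Printing Implicit Defensive.

(* Simplicial operators: order-preserving maps [m] -> [n],
   where [m] = {0,...,m} = 'I_m.+1.                                     *)

Definition monob (m n : nat) (f : {ffun 'I_m.+1 -> 'I_n.+1}) : bool :=
  [forall i : 'I_m.+1, forall j : 'I_m.+1, (i <= j) ==> (f i <= f j)].

Definition Op (m n : nat) := {f : {ffun 'I_m.+1 -> 'I_n.+1} | monob f}.

Definition opf (m n : nat) (f : Op m n) : 'I_m.+1 -> 'I_n.+1 :=
  fun i => val f i.

Lemma monob_finfun (m n : nat) (g : 'I_m.+1 -> 'I_n.+1) :
  (forall i j : 'I_m.+1, i <= j -> g i <= g j) -> monob (finfun g).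
Proof.
move=> H; apply/forallP => i; apply/forallP => j; apply/implyP => Hij.
by rewrite !ffunE; apply: H.
Qed.

Definition mkOp (m n : nat) (g : 'I_m.+1 -> 'I_n.+1)
  (H : forall i j : 'I_m.+1, i <= j -> g i <= g j) : Op m n :=
  exist _ (finfun g) (monob_finfun H).

Lemma opf_mono (m n : nat) (f : Op m n) (i j : 'I_m.+1) :
  i <= j -> opf f i <= opf f j.
Proof.
move=> Hij; case: f => f /= Hf; rewrite /opf /=.
by move/forallP: Hf => /(_ i) /forallP /(_ j) /implyP; apply.
Qed.

Definition comp (m n p : nat) (f : Op n p) (g : Op m n) : Op m p :=
  @mkOp m p (fun i => opf f (opf g i))
    (fun i j Hij => opf_mono f (opf_mono g Hij)).

Definition idop (n : nat) : Op n n :=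
  @mkOp n n (fun i => i) (fun i j Hij => Hij).

Definition vert (n : nat) (i : 'I_n.+1) : Op 0 n :=
  @mkOp 0 n (fun _ => i) (fun _ _ _ => leqnn _).

Definition surjOp (m n : nat) (f : Op m n) : Prop :=
  forall j : 'I_n.+1, exists i : 'I_m.+1, opf f i = j.

(* A simplicial set (with strict, Leibniz equality of simplices);
   sset_act f x is the simplex x.f (contravariant action).              *)
Record SSet := {
  sset_obj : nat -> Type;
  sset_act : forall m n, Op m n -> sset_obj n -> sset_obj m;
  sset_act_id : forall n (x : sset_obj n), sset_act (idop n) x = x;
  sset_act_comp : forall m n p (f : Op n p) (g : Op m n) (x : sset_obj p),
      sset_act (comp f g) x = sset_act g (sset_act f x)
}.

(* Simplicial data presented as setoids: simplices in degree n form a type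
   [sobj n], "equality" of simplices is [seqv].  This is used for the
   quotients / pushouts / colimits arising in the construction of J^beta X
   (Rocq has no quotient types). *)
Record sdata := {
  sobj : nat -> Type;
  seqv : forall n, sobj n -> sobj n -> Prop;
  sact : forall m n, Op m n -> sobj n -> sobj m
}.

Definition toData (X : SSet) : sdata :=
  {| sobj := sset_obj X; seqv := fun n => @eq (sset_obj X n);
     sact := @sset_act X |}.

Section Simplices.
Variable D : sdata.

Definition degenerate (n : nat) (x : sobj D n) : Prop :=
  exists (m : nat) (s : Op n m) (y : sobj D m),
    m < n /\ surjOp s /\ seqv (sact s y) x.

Definition nondeg (n : nat) (x : sobj D n) : Prop := ~ degenerate x.

(* x is embedded iff its representing map Delta[n] -> D, sigma |-> x.sigma,
   is injective in every degree k. *)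
Definition embedded (n : nat) (x : sobj D n) : Prop :=
  forall (k : nat) (s t : Op k n),
    seqv (sact s x) (sact t x) -> s = t.

Definition nonsingular : Prop :=
  forall (n : nat) (x : sobj D n), nondeg x -> embedded x.

End Simplices.

Definition pdec (P : Prop) : bool :=
  if excluded_middle_informative P then true else false.

Section Enforcer.
Variables (D : sdata) (n : nat) (x : sobj D n).

Definition vsim (i j : 'I_n.+1) : Prop :=
  seqv (sact (vert i) x) (sact (vert j) x).

Definition vapprox (i k : 'I_n.+1) : Prop :=
  exists j : 'I_n.+1, i <= k <= j /\ vsim i j.

Definition vsimeq : 'I_n.+1 -> 'I_n.+1 -> Prop :=
  clos_refl_sym_trans _ vapprox.

(* Since the
   classes are intervals, the ordered quotient [n]/≃ is [m_x] with
   m_x = number of breaks, and rho_x(i) = number of breaks below i. *)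
Definition brk (j : 'I_n) : bool :=
  ~~ pdec (vsimeq (inord j) (inord j.+1)).

Definition mx : nat := \sum_(j < n) brk j.

Definition rho_nat (i : 'I_n.+1) : nat := \sum_(j < n) ((j < i) && brk j).

Lemma rho_nat_lt (i : 'I_n.+1) : rho_nat i < mx.+1.
Proof.
rewrite ltnS /rho_nat /mx; apply: leq_sum => j _.
by case: (j < i); case: (brk j).
Qed.

Definition rho_fun (i : 'I_n.+1) : 'I_mx.+1 := Ordinal (rho_nat_lt i).

Lemma rho_mono (i i' : 'I_n.+1) : i <= i' -> rho_fun i <= rho_fun i'.
Proof.
move=> Hii; rewrite /= /rho_nat; apply: leq_sum => j _.
case: (brk j); rewrite ?andbF ?andbT //.
case Hj: (j < i) => //=.
by rewrite (leq_trans Hj Hii).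
Qed.

Definition rho : Op n mx := @mkOp n mx rho_fun rho_mono.

End Enforcer.

Section Collapse.
Variable Y : sdata.

Definition nds := {n : nat & {y : sobj Y n | nondeg y}}.

Definition nds_deg (x : nds) : nat := projT1 x.
Definition nds_smp (x : nds) : sobj Y (nds_deg x) := proj1_sig (projT2 x).
Definition nds_m (x : nds) : nat := mx (nds_smp x).
Definition nds_rho (x : nds) : Op (nds_deg x) (nds_m x) := rho (nds_smp x).

(* degree-k part of  Y  ⊔  ⨆_{x in Y^sharp} Delta[m_x] *)
Definition JObj (k : nat) : Type :=
  (sobj Y k + {x : nds & Op k (nds_m x)})%type.

(* generating identifications: equality in Y, and
   (x.sigma) ~ (x, rho_x o sigma) for sigma in Delta[n_x]_k *)
Definition Jgen (k : nat) (a b : JObj k) : Prop :=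
  match a, b with
  | inl a', inl b' => seqv a' b'
  | inl a', inr (existT x t) =>
      exists s : Op k (nds_deg x),
        seqv a' (sact s (nds_smp x)) /\ t = comp (nds_rho x) s
  | _, _ => False
  end.

Definition Jeqv (k : nat) : JObj k -> JObj k -> Prop :=
  clos_refl_sym_trans _ (@Jgen k).

Definition Jact (m k : nat) (f : Op m k) (a : JObj k) : JObj m :=
  match a with
  | inl a' => inl (sact f a')
  | inr (existT x t) => inr (existT _ x (comp t f))
  end.

Definition J : sdata := {| sobj := JObj; seqv := Jeqv; sact := Jact |}.

Definition Jin (k : nat) (y : sobj Y k) : sobj J k := inl y.

End Collapse.

(* Transfinite iteration J^beta X, indexed by the elements of a          *)
(* well-ordered type (an element beta stands for the ordinal of its      *)
(* initial segment).                                                     *)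

Record WellOrder := {
  wcar : Type;
  wlt : wcar -> wcar -> Prop;
  wlt_wf : well_founded wlt;
  wlt_trans : forall a b c, wlt a b -> wlt b c -> wlt a c;
  wlt_total : forall a b, wlt a b \/ a = b \/ wlt b a
}.

Section Iterate.
Variables (W : WellOrder) (X : sdata).

Definition ipred (beta alpha : wcar W) : Prop :=
  wlt alpha beta /\ forall g, wlt g beta -> g = alpha \/ wlt g alpha.

(* J^beta X together with the canonical map f^{0,beta} : X -> J^beta X *)
Definition IterT (beta : wcar W) : Type :=
  {D : sdata & forall n, sobj X n -> sobj D n}.

Definition iter_step (beta : wcar W)
  (rec : forall alpha, wlt alpha beta -> IterT alpha) : IterT beta :=
  match excluded_middle_informative (exists alpha, ipred beta alpha) with
  | left H =>
      let alpha := proj1_sig (constructive_indefinite_description _ H) in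
      let Ha := proj2_sig (constructive_indefinite_description _ H) in
      let r := rec alpha (proj1 Ha) in
      existT (fun D : sdata => forall n, sobj X n -> sobj D n)
        (J (projT1 r)) (fun n x => Jin (projT2 r n x))
  | right _ =>
      (* zero or limit: the quotient of X identifying x, y iff
         f^{0,alpha} x = f^{0,alpha} y for some alpha < beta
         (for beta = 0 this is X itself) *)
      existT (fun D : sdata => forall n, sobj X n -> sobj D n)
        {| sobj := sobj X;
           seqv := fun n x y =>
             seqv x y \/
             exists (alpha : wcar W) (h : wlt alpha beta),
               seqv (projT2 (rec alpha h) n x) (projT2 (rec alpha h) n y);
           sact := @sact X |}
        (fun n x => x)
  end.

Definition iter (beta : wcar W) : IterT beta :=
  Fix (@wlt_wf W) IterT iter_step beta.

Definition Jpow (beta : wcar W) : sdata := projT1 (iter beta).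

End Iterate.
Arguments Jpow : clear implicits.

(* Main.v *)
Require Import Defs.
From Stdlib Require Import Relations ClassicalEpsilon Classical FunctionalExtensionality.
From mathcomp Require Import all_boot zify.
Set Warnings "-notation-overridden".
Local Notation comp := Defs.comp.
Local Notation iter := Defs.iter.

Lemma opP (m n : nat) (f g : Op m n) : (forall i, opf f i = opf g i) -> f = g.
Proof. by move=> H; apply: val_inj; apply/ffunP => i; exact: H. Qed.

Lemma opf_mk m n (g : 'I_m.+1 -> 'I_n.+1) H i : opf (@mkOp m n g H) i = g i.
Proof. by rewrite /opf /= ffunE. Qed.

Lemma opf_comp m n p (f : Op n p) (g : Op m n) i : opf (comp f g) i = opf f (opf g i).
Proof. exact: opf_mk. Qed.

Lemma comp_assoc m n p q (f : Op p q) (g : Op n p) (h : Op m n) :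
  comp (comp f g) h = comp f (comp g h).
Proof. by apply: opP => i; rewrite !opf_comp. Qed.

Lemma comp_id_l m n (f : Op m n) : comp (idop n) f = f.
Proof. by apply: opP => i; rewrite opf_comp opf_mk. Qed.
Lemma comp_id_r m n (f : Op m n) : comp f (idop m) = f.
Proof. by apply: opP => i; rewrite opf_comp opf_mk. Qed.
Lemma comp_vert m n (f : Op m n) i : comp f (vert i) = vert (opf f i).
Proof. by apply: opP => z; rewrite opf_comp !opf_mk. Qed.

Lemma sum_eq_le1 n i : \sum_(j < n) (nat_of_ord j == i) = (i < n).
Proof.
elim: n => [|n IH]; first by rewrite big_ord0.
rewrite big_ord_recr /= IH.
by case: (ltngtP i n) => H; lia.
Qed.

Lemma ivt n (b : 'I_n -> bool) :
  let g := fun i => \sum_(j < n) ((j < i) && b j) in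
  forall N v, v <= g N -> exists2 i, i <= N & g i = v.
Proof.
move=> g; elim=> [|N IH] v Hv.
  exists 0 => //; apply/eqP; rewrite eqn_leq Hv /=.
  suff -> : g 0 = 0 by []. by rewrite /g big1 // => j _.
case: (leqP v (g N)) => H; first by case: (IH v H) => i Hi Hg; exists i => //; exact: leqW.
exists N.+1 => //; apply/eqP; rewrite eqn_leq Hv /=.
have : g N.+1 <= g N + \sum_(j < n) (nat_of_ord j == N).
  rewrite /g -big_split /=; apply: leq_sum => j _.
  case: (b j); rewrite ?andbT ?andbF /=; lia.
move=> Hle; have := sum_eq_le1 n N; lia.
Qed.

Lemma rho_surj (D : sdata) n (x : sobj D n) : surjOp (rho x).
Proof.
move=> j.
have Hj : (j : nat) <= \sum_(k < n) ((k < n) && brk x k).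
  have -> : \sum_(k < n) ((k < n) && brk x k) = mx x.
    by rewrite /mx; apply: eq_bigr => k _; rewrite ltn_ord.
  by rewrite -ltnS; exact: ltn_ord j.
case: (@ivt n (brk x) n j Hj) => i Hi Hg.
have Hi' : i < n.+1 by [].
exists (Ordinal Hi'); apply: val_inj; rewrite /rho opf_mk /=.
exact: Hg.
Qed.

Lemma op_section n m (r : Op n m) : surjOp r ->
  exists s : Op m n, forall j, opf r (opf s j) = j.
Proof.
move=> Hs.
have ex : forall j : 'I_m.+1, exists i, (i < n.+1) && (opf r (inord i) == j).
  move=> j; case: (Hs j) => i Hi; exists i; rewrite ltn_ord /= inord_val Hi //.
pose g j : 'I_n.+1 := inord (ex_minn (ex j)).
have Hg : forall j, opf r (g j) = j.
  move=> j; rewrite /g; case: ex_minnP => a /andP [_ /eqP Ha] _; exact: Ha.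
have Hmono : forall j j' : 'I_m.+1, j <= j' -> g j <= g j'.
  move=> j j' Hjj; rewrite /g.
  case: ex_minnP => a /andP [Ha1 /eqP Ha2] Hmin.
  case: ex_minnP => a' /andP [Ha1' /eqP Ha2'] Hmin'.
  rewrite !inordK //; rewrite leqNgt; apply/negP => Hlt.
  have H1 : opf r (inord a') <= opf r (inord a).
    by apply: opf_mono; rewrite !inordK // ltnW.
  rewrite Ha2 Ha2' in H1.
  have Hjeq : j = j' by apply: val_inj; apply/eqP; rewrite eqn_leq Hjj H1.
  rewrite -Hjeq in Ha2'.
  have := Hmin a'; rewrite Ha1' Ha2' eqxx => /(_ isT); rewrite leqNgt Hlt //.
exists (@mkOp m n g Hmono) => j; rewrite opf_mk; exact: Hg.
Qed.

Lemma mx_lt (D : sdata) n (x : sobj D n) (a b : 'I_n.+1) :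
  (forall i j, vsim x i j -> vsim x j i) ->
  a != b -> vsim x a b -> mx x < n.
Proof.
move=> Hsym Hab Hv.
wlog Hlt : a b Hab Hv / a < b.
  move=> Hw; case: (ltngtP a b) => H; first exact: (Hw a b).
  - by apply: (Hw b a) => //; [rewrite eq_sym | exact: Hsym].
  - by move: Hab; rewrite (val_inj H) eqxx.
have Han : a < n by have := ltn_ord b; lia.
pose j0 := Ordinal Han.
have Hb : brk x j0 = false.
  rewrite /brk /pdec; case: excluded_middle_informative => //= H; exfalso; apply: H.
  apply: rst_step; exists b; split.
    by rewrite !inordK ?leqnn //= ?ltnS // ltnW.
  by rewrite (_ : inord j0 = a) //; apply: val_inj; rewrite /= inordK.
rewrite /mx (bigD1 j0) //= Hb add0n.
have E : \sum_(j < n) 1 = n by rewrite sum1_card card_ord.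
rewrite -[X in _ < X]E [X in _ < X](bigD1 j0) //= add1n ltnS; apply: leq_sum => j _; exact: leq_b1.
Qed.

Record Good (D : sdata) : Prop := {
 g_refl : forall n (u : sobj D n), seqv u u;
 g_sym : forall n (u v : sobj D n), seqv u v -> seqv v u;
 g_trans : forall n (u v w : sobj D n), seqv u v -> seqv v w -> seqv u w;
 g_cong : forall m n (g : Op m n) (u v : sobj D n), seqv u v -> seqv (sact g u) (sact g v);
 g_comp : forall m n p (g : Op n p) (h : Op m n) (u : sobj D p),
     seqv (sact h (sact g u)) (sact (comp g h) u);
 g_id : forall n (u : sobj D n), seqv (sact (idop n) u) u }.
Arguments g_refl {D}. Arguments g_sym {D}. Arguments g_trans {D}.
Arguments g_cong {D}. Arguments g_comp {D}. Arguments g_id {D}.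

Lemma Good_J D : Good D -> Good (J D).
Proof.
move=> G; split.
- move=> n u; exact: rst_refl.
- move=> n u v; exact: rst_sym.
- move=> n u v w; exact: rst_trans.
- move=> m n g u v; elim => {u v} [u v Hg| u | u v _ IH | u v w _ IH1 _ IH2].
  + apply: rst_step; move: u v Hg => [u|[x t]] [v|[y t']] //=.
    * move=> H. exact: (@g_cong D G m n g u v H).
    * case=> s [Hs ->]; exists (comp s g); split; last by rewrite comp_assoc.
      eapply (g_trans G); last eapply (g_comp G).
      eapply (g_cong G); exact: Hs.
  + exact: rst_refl.
  + exact: rst_sym.
  + exact: rst_trans IH2.
- move=> m n p g h [u|[x t]] /=.
  + apply: rst_step; exact: (g_comp G).
  + rewrite comp_assoc; exact: rst_refl.
- move=> n [u|[x t]] /=.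
  + apply: rst_step; exact: (g_id G).
  + rewrite comp_id_r; exact: rst_refl.
Qed.

Lemma surj_J (X D : sdata) (f : forall n, sobj X n -> sobj D n) : Good D ->
  (forall n (w : sobj D n), exists x, seqv (f n x) w) ->
  forall n (w : sobj (J D) n), exists x, seqv (Jin (f n x)) w.
Proof.
move=> G Hs n [w|[x t]].
- case: (Hs n w) => x0 Hx0; exists x0; apply: rst_step; exact: Hx0.
- case: (@op_section _ _ _ (@rho_surj _ _ (nds_smp x))) => sg Hsg.
  case: (Hs n (sact (comp sg t) (nds_smp x))) => x0 Hx0.
  exists x0; apply: (rst_trans _ _ _ (inl (sact (comp sg t) (nds_smp x)) : JObj D n)).
    by apply: rst_step; exact: Hx0.
  apply: rst_step.
  exists (comp sg t); split; first exact: (g_refl G).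
  by apply: opP => i; rewrite !opf_comp Hsg.
Qed.

Lemma collapse (D : sdata) (G : Good D) n (u : sobj D n) (a b : 'I_n.+1) :
  a != b -> vsim u a b -> degenerate (Jin u).
Proof.
move=> Hab Hv.
case: (classic (degenerate u)) => [[m [s [v [Hm [Hs Hsv]]]]] | Hnd].
  exists m, s, (inl v : JObj D m); split => //; split => //.
  apply: rst_step; exact: Hsv.
pose xx : nds D := existT _ n (exist _ u Hnd).
exists (nds_m xx), (nds_rho xx), (inr (existT _ xx (idop (nds_m xx))) : JObj D (nds_m xx)).
split; first by apply: (@mx_lt D n u a b _ Hab Hv) => i j; rewrite /vsim; exact: (g_sym G).
split; first exact: rho_surj.
apply: rst_sym; apply: rst_step; exists (idop n); split.
  exact: (g_sym G _ _ _ (g_id G _ _)).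
by rewrite /= comp_id_l comp_id_r.
Qed.

Definition olt (a b : option nat) : Prop :=
  match a, b with
  | Some i, Some j => i < j
  | Some _, None => True
  | None, _ => False
  end.

Lemma olt_wf : well_founded olt.
Proof.
have HS : forall i, Acc olt (Some i).
  move=> i; elim: i {-2}i (leqnn i) => [|i IH] j Hj.
    constructor; case=> [k|]; simpl; intro Hk; last by case: Hk.
    exfalso; move: Hk Hj; case: j; [by [] | by []].
  constructor; case=> [k|]; simpl; intro Hk; last by case: Hk.
  apply: IH; lia.
case => [i|]; first exact: HS.
constructor; case=> [j|]; simpl; intro H; last by case: H.
exact: HS.
Qed.

Lemma olt_trans a b c : olt a b -> olt b c -> olt a c.
Proof. by case: a => [i|]; case: b => [j|]; case: c => [k|] //=; apply: ltn_trans. Qed.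

Lemma olt_total a b : olt a b \/ a = b \/ olt b a.
Proof.
case: a => [i|]; case: b => [j|] /=.
- case: (ltngtP i j) => H; [left | right; right | right; left; rewrite H] => //.
- by left.
- by right; right.
- by right; left.
Qed.

Definition Wo : WellOrder := {| wcar := option nat; wlt := olt; wlt_wf := olt_wf;
  wlt_trans := olt_trans; wlt_total := olt_total |}.

Lemma step_ext (X : sdata) (x : wcar Wo) (f g : forall y, wlt y x -> IterT X y) :
  (forall y p, f y p = g y p) -> iter_step f = iter_step g.
Proof.
move=> H; have -> : f = g; last by [].
apply: functional_extensionality_dep => y; apply: functional_extensionality_dep => p; exact: H.
Qed.

Lemma iter_unfold (X : sdata) (b : wcar Wo) : iter X b = iter_step (fun y _ => iter X y).
Proof. rewrite /iter Fix_eq //; exact: step_ext. Qed.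

Lemma iter_S (X : sdata) k : iter X (Some k.+1 : wcar Wo) =
  existT _ (J (projT1 (iter X (Some k : wcar Wo))))
    (fun n x => Jin (projT2 (iter X (Some k : wcar Wo)) n x)).
Proof.
rewrite iter_unfold /iter_step.
case: excluded_middle_informative => [H|H]; last first.
  exfalso; apply: H; exists (Some k); split; first by rewrite /= ltnSn.
  case=> [g|] //= Hg; rewrite ltnS leq_eqVlt in Hg.
  by case/orP: Hg => [/eqP ->|]; auto.
case: constructive_indefinite_description => al [Hal Hall] /=.
have E : al = Some k.
  case: al Hal Hall => [j|] //= Hj Hall.
  case: (Hall (Some k)) => /=; first by rewrite ltnSn.
    by case=> ->.
  by move=> Hkj; move: Hj; rewrite ltnS leqNgt Hkj.
by subst al.
Qed.

Definition Yk (X : SSet) (k : nat) : sdata := projT1 (iter (toData X) (Some k : wcar Wo)).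
Definition fk (X : SSet) (k : nat) : forall n, sset_obj X n -> sobj (Yk X k) n :=
  projT2 (iter (toData X) (Some k : wcar Wo)).

Lemma Inv_k (X : SSet) k : Good (Yk X k) /\
  (forall m n (g : Op m n) x, fk X k m (sset_act g x) = sact g (fk X k n x)) /\
  (forall n (w : sobj (Yk X k) n), exists x, seqv (fk X k n x) w).
Proof.
elim: k => [|k [G [Heq Hs]]].
  rewrite /Yk /fk iter_unfold /iter_step.
  case: excluded_middle_informative => [H|H].
    exfalso; case: H => al [Hal _]; move: Hal; case: al => [j|]; simpl; [by [] | by case].
  simpl.
  have No : forall al, ~ olt al (Some 0) by case=> [j|]; simpl; [by [] | by case].
  split; last split.
  - split.
    + by move=> n u; left.
    + by move=> n u v [->|[al [h _]]]; [left | case: (No al h)].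
    + by move=> n u v w [E1|[al [h _]]] [E2|[al' [h' _]]];
        [left; exact: (etrans E1 E2) | case: (No al' h') | case: (No al h) | case: (No al h)].
    + by move=> m n g u v [->|[al [h _]]]; [left | case: (No al h)].
    + by move=> m n p g h u; left; symmetry; exact: sset_act_comp.
    + by move=> n u; left; exact: sset_act_id.
  - by [].
  - by move=> n w; exists w; left.
rewrite /Yk /fk iter_S /=.
split; last split.
- exact: Good_J.
- by move=> m n g x; have := Heq m n g x; rewrite /fk => ->.
- exact: (@surj_J (toData X) (Yk X k) (fk X k) G Hs).
Qed.

Lemma deg_succ (X : SSet) k n (x : sset_obj X n) (a b : 'I_n.+1) :
  a != b -> vsim (fk X k n x) a b -> degenerate (fk X k.+1 n x).
Proof.
move=> Hab Hv; have [G _] := Inv_k X k.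
have := (@collapse (Yk X k) G n (fk X k n x) a b Hab Hv).
by rewrite /Yk /fk iter_S /=.
Qed.

Lemma deg_L (X : SSet) k n (x : sset_obj X n) : degenerate (fk X k n x) ->
  exists m (s : Op n m) (w : sset_obj X m), m < n /\ surjOp s /\
    seqv (fk X k n (sset_act s w)) (fk X k n x).
Proof.
have [G [Heq Hs]] := Inv_k X k.
case=> m [s [w [Hm [Hs' Hw]]]].
case: (Hs m w) => w0 Hw0.
exists m, s, w0; split => //; split => //.
rewrite Heq; apply: (g_trans G) Hw; exact: (g_cong G).
Qed.

Theorem mainTheorem13 (X : SSet) :
  exists (W : WellOrder) (lambda : wcar W),
    nonsingular (Jpow W (toData X) lambda).
Proof.
exists Wo, (None : wcar Wo).
rewrite /Jpow iter_unfold /iter_step.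
case: excluded_middle_informative => [H|H].
  exfalso; case: H => al [Hal Hall]; move: Hal Hall; case: al => [j|]; simpl; last by case.
  move=> _ Hall; case: (Hall (Some j.+1) I); simpl.
    by case; lia.
  by rewrite ltnNge leqnSn.
simpl.
move=> n x Hnd k s t Hst.
apply: NNPP => Hne.
have [i Hi] : exists i, opf s i != opf t i.
  apply: NNPP => Hn; apply: Hne; apply: opP => i.
  case: (boolP (opf s i == opf t i)) => [/eqP //| Hneq]; exfalso; apply: Hn; by exists i.
have [k0 Hk0] : exists k0, seqv (fk X k0 k (sset_act s x)) (fk X k0 k (sset_act t x)).
  case: Hst => [E | [al [h Hal]]].
    exists 0; simpl in E; rewrite E; have [G _] := Inv_k X 0; exact: (g_refl G).
  move: h Hal; case: al => [j|] h Hal; last by case: h.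
  by exists j; exact: Hal.
have [G [Heq Hs]] := Inv_k X k0.
have Hv : vsim (fk X k0 n x) (opf s i) (opf t i).
  rewrite /vsim -!Heq -(comp_vert _ _ s i) -(comp_vert _ _ t i) !sset_act_comp !Heq.
  by apply: (g_cong G); move: Hk0; rewrite !Heq.
have Hd := @deg_succ X k0 n x _ _ Hi Hv.
have [m [s' [w [Hm [Hs' Hw]]]]] := @deg_L X _ _ _ Hd.
apply: Hnd; exists m, s', w; split => //; split => //.
right; exists (Some k0.+1), I; exact: Hw.
Qed.
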